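(* Let $\mathbb{C}[T_0,\dots,T_r]$ carry the $\mathbb{Z}$-grading $\deg T_i=w_i\in\mathbb{Z}_{>0}$, let $f_1,\dots,f_s\in\mathbb{C}[T_0,\dots,T_r]$ be homogeneous polynomials, let $n_0,\dots,n_r>0$, $m\ge0$ be integers, $n=n_0+\dots+n_r$, let $l_i=(l_{i1},\dots,l_{in_i})$ be tuples of positive integers, and set $$g_i:=f_i(T_0^{l_0},\dots,T_r^{l_r})\in\mathbb{C}[T_{ij},S_k],\qquad T_i^{l_i}:=T_{i1}^{l_{i1}}\cdots T_{in_i}^{l_{in_i}},$$ where $\mathbb{C}[T_{ij},S_k]$ is the polynomial ring in $T_{ij}$ ($0\le i\le r$, $1\le j\le n_i$) and $S_1,\dots,S_m$. Then the affine variety $V(g_1,\dots,g_s)\subseteq\mathbb{C}^{n+m}$ is connected. *)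

(* Defs.v *)
From HB Require Import structures.
From mathcomp Require Import all_boot all_order all_algebra.
From mathcomp Require Import mpoly.
From mathcomp Require Import all_classical all_reals all_analysis.
From mathcomp Require Import complex.
Import numFieldNormedType.Exports.

Import Order.TTheory GRing.Theory Num.Theory.
Local Open Scope ring_scope.

(* The complex numbers: C = R[i] for a real type R; the copy (R[i])^o carries
   the Euclidean (modulus-induced) topology of a numFieldType.  *)
Notation Cx R := ((R[i])^o).

Definition whomog (R : realType) (k : nat) (w : 'I_k -> nat)
    (p : mpoly.mpoly k (Cx R)) : Prop :=
  exists d : nat, forall mo : mpoly.multinom k, mo \in mpoly.msupp p ->
    (\sum_(i < k) w i * mo i)%N = d.

(* Variables of C[T_ij, S_k]: T_ij for i < r+1, j < n_i (0-based), and S_k, k < m. *)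
Definition varT (r : nat) (n : 'I_r.+1 -> nat) (m : nat) : finType :=
  ({i : 'I_r.+1 & 'I_(n i)} + 'I_m)%type.

Definition nvars r n m := #|varT r n m|.

Definition Xv (R : realType) r n m (v : varT r n m) :
    mpoly.mpoly (nvars r n m) (Cx R) :=
  mpoly.mpolyX (Cx R) (mpoly.mX (enum_rank v)).

Definition Tpow (R : realType) r n m (l : forall i : 'I_r.+1, 'I_(n i) -> nat)
    (i : 'I_r.+1) : mpoly.mpoly (nvars r n m) (Cx R) :=
  \prod_(j < n i) Xv R r n m (inl (Tagged (fun i => 'I_(n i)) j)) ^+ l i j.

Definition subst_mon (R : realType) r n m (l : forall i : 'I_r.+1, 'I_(n i) -> nat)
    (f : mpoly.mpoly r.+1 (Cx R)) : mpoly.mpoly (nvars r n m) (Cx R) :=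
  mpoly.comp_mpoly [tuple Tpow R r n m l i | i < r.+1] f.

(* The zero set V(g_1,...,g_s) in C^{n+m}, with the product (= Euclidean) topology *)
Definition zero_set (R : realType) (N : nat) (s : nat)
    (g : 'I_s -> mpoly.mpoly N (Cx R)) : set {ptws 'I_N -> Cx R} :=
  [set x | forall k : 'I_s, mpoly.meval x (g k) = 0].

(* Main.v *)
Require Import Defs.
From HB Require Import structures.
From mathcomp Require Import all_boot all_order all_algebra.
From mathcomp Require Import mpoly.
From mathcomp Require Import all_classical all_reals all_analysis.
From mathcomp Require Import complex.
Import numFieldNormedType.Exports.
Import Order.TTheory GRing.Theory Num.Theory.
Local Open Scope ring_scope.
Local Open Scope classical_set_scope.
Local Open Scope complex_scope.

Lemma ptws_cont (T : topologicalType) (I : Type) (U : topologicalType)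
  (g : T -> {ptws I -> U}) : (forall i, continuous (fun t => g t i)) -> continuous g.
Proof.
move=> cg x; apply/cvg_sup => i.
exact: (@continuous_comp_initial _ T U (fun f : I -> U => f i) g (cg i) x).
Qed.

Lemma realC_cont (R : realType) : continuous (fun t : R => (t%:C : Cx R)).
Proof.
move=> t; apply/cvgrPdist_lt => e e0.
have := e0; rewrite ltcE /= => /andP[/eqP Ie Re0].
have : (fun u : R => u) @ t --> t by [].
move/cvgrPdist_lt/(_ _ Re0); apply: filterS => u hu.
rewrite -rmorphB normc_def /= expr0n /= addr0 sqrtr_sqr.
case: e Ie e0 Re0 hu => a b /= -> _ _ hu.
by rewrite -complexr0 ltcR.
Qed.

Lemma meval_mX (K : comRingType) N (v : 'I_N -> K) k :
  mpoly.meval v (mpoly.mpolyX K (mpoly.mX k)) = v k.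
Proof.
rewrite mpoly.mevalX (bigD1 k) //= big1 => [|i /negPf ik].
  by rewrite /mpoly.mX mpoly.mnmE eqxx expr1 mulr1.
by rewrite /mpoly.mX mpoly.mnmE ik expr0.
Qed.

Lemma homog_scale (K : comRingType) k (w : 'I_k -> nat) (p : mpoly.mpoly k K) d
  (hp : forall mo, mo \in mpoly.msupp p -> (\sum_(i < k) w i * mo i)%N = d)
  (c : nat) (z : K) (y : 'I_k -> K) :
  mpoly.meval (fun i => z ^+ (c * w i) * y i) p = z ^+ (c * d) * mpoly.meval y p.
Proof.
rewrite !mpoly.mevalE mulr_sumr big_seq [RHS]big_seq; apply: eq_bigr => mo hmo.
under eq_bigr => i _ do rewrite exprMn -exprM.
rewrite big_split /= prodrXr.
under eq_bigr => i _ do rewrite -mulnA.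
by rewrite -big_distrr /= hp // mulrCA.
Qed.

Theorem lemma3p8 (R : realType) (r : nat) (w : 'I_r.+1 -> nat)
    (hw : forall i, (0 < w i)%N)
    (s : nat) (f : 'I_s -> mpoly.mpoly r.+1 (Cx R))
    (hf : forall k, whomog R r.+1 w (f k))
    (n : 'I_r.+1 -> nat) (hn : forall i, (0 < n i)%N) (m : nat)
    (l : forall i : 'I_r.+1, 'I_(n i) -> nat)
    (hl : forall i j, (0 < l i j)%N) :
  connected (zero_set R (nvars r n m) s (fun k => subst_mon R r n m l (f k))).
Proof.
set N := nvars r n m.
pose Lam i := (\sum_(j < n i) l i j)%N.
pose c := (\prod_(i < r.+1) Lam i)%N.
pose q i := (\prod_(k < r.+1 | k != i) Lam k)%N.
have hc i : c = (Lam i * q i)%N by rewrite /c (bigD1 i).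
pose e (v : varT r n m) : nat :=
  match v with inl (existT i j) => (w i * q i)%N | inr _ => 1%N end.
have hLam i : (0 < Lam i)%N.
  by rewrite /Lam (bigD1 (Ordinal (hn i))) //= ltn_addr.
have he v : (0 < e v)%N.
  case: v => [[i j]|] //=; rewrite muln_gt0 hw /=.
  by apply: prodn_cond_gt0 => k _.
pose phi (x : 'I_N -> Cx R) (z : Cx R) : {ptws 'I_N -> Cx R} :=
  fun k => z ^+ e (enum_val k) * x k.
have hT x z i : mpoly.meval (phi x z) (Tpow R r n m l i) =
    z ^+ (c * w i) * mpoly.meval x (Tpow R r n m l i).
  have -> : (c * w i = \sum_(j < n i) (w i * q i) * l i j)%N.
    by rewrite -big_distrr /= -/(Lam i) (hc i) mulnC [(Lam i * q i)%N]mulnC mulnA.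
  rewrite /Tpow !rmorph_prod /= -prodrXr -big_split /=.
  apply: eq_bigr => j _; rewrite !rmorphXn /Xv.
rewrite [X in X ^+ _ = _]/= [X in _ * X ^+ _]/=.
rewrite !meval_mX /phi enum_rankK /=.

  by rewrite exprMn -exprM.
have hG x z k : exists d, mpoly.meval (phi x z) (subst_mon R r n m l (f k)) =
    z ^+ (c * d) * mpoly.meval x (subst_mon R r n m l (f k)).
  have [d hd] := hf k; exists d.
  rewrite /subst_mon !mpoly.comp_mpoly_meval.
  rewrite (mpoly.meval_eq _ (v2 := fun i => z ^+ (c * w i) *
              mpoly.meval x (Tpow R r n m l i))); last first.
    by move=> i /=; rewrite tnth_mktuple hT.
  rewrite (@homog_scale _ _ _ _ _ hd); congr (_ * _); apply: mpoly.meval_eq => i /=.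
  by rewrite tnth_mktuple.
set V := zero_set _ _ _ _.
have hV x z : V x -> V (phi x z).
  move=> Vx k; have [d ->] := hG x z k; by rewrite Vx mulr0.
have -> : V = \bigcup_(x in V) ((fun t : R => phi x t%:C) @` `[0, 1]%classic).
  apply/seteqP; split.
  - move=> x Vx; exists x => //; exists 1.
      by rewrite /= in_itv /= lexx ler01.
    by apply: funext => k; rewrite /phi rmorph1 expr1n mul1r.
  - by move=> y [x Vx [t _ <-]]; exact: hV.
apply: bigcup_connected.
  exists (fun _ => 0) => x Vx; exists 0.
    by rewrite /= in_itv /= lexx ler01.
  apply: funext => k; rewrite /phi rmorph0 expr0n.
  by rewrite eqn0Ngt he mul0r.
move=> x Vx; apply: connected_continuous_connected; first exact: segment_connected.
apply: continuous_subspaceT; apply: ptws_cont => k t.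
rewrite /phi.
apply: (@continuousZr_tmp _ _ _ (fun t : R => (t%:C : Cx R) ^+ e (enum_val k)) (x k)).
have -> : (fun t : R => (t%:C : Cx R) ^+ e (enum_val k)) =
    (fun t : R => ((t ^+ e (enum_val k))%:C : Cx R)).
  by apply: funext => u; rewrite rmorphXn.
apply: (@continuous_comp _ _ _ (fun t : R => t ^+ e (enum_val k)) (fun u : R => (u%:C : Cx R))).
  exact: exprn_continuous.
exact: realC_cont.
Qed.
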